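(* Let $M=(m_{ij})$ be an $n\times n$ homogeneous, well-ordered integer matrix of degree $d$, and let $M'$ be the $(n-1)\times n$ matrix obtained from $M$ by erasing the first row. Assume there exists a zero-dimensional subscheme $Z\subset\mathbb{P}^2$ having a degree Hilbert-Burch matrix equal to $M'$. Then the Hilbert function of $Z$ in degree $d-1$ equals the degree of $Z$.
   Context: A matrix of integers is homogeneous if every $2\times2$ submatrix $\begin{pmatrix} a&b\\ c&e\end{pmatrix}$ satisfies $a+e=b+c$; the degree of a square homogeneous matrix is $\sum_i m_{i\sigma(i)}$, independent of $\sigma$. Well-ordered: for $i'>i$, $j'>j$, $m_{i'j}\le m_{ij}$ and $m_{ij'}\ge m_{ij}$. For a zero-dimensional subscheme $Z\subset\mathbb{P}^2$, a degree Hilbert-Burch (dHB) matrix of $Z$ is the integer matrix $(b_i-a_j)$ arising from a (not necessarily minimal) free resolution $0\to\bigoplus_{i=1}^{n-1}\mathcal{O}(-b_i)\xrightarrow{A}\bigoplus_{j=1}^{n}\mathcal{O}(-a_j)\to\mathcal{I}_Z\to0$, where $A=(f_{ij})$ has $\deg f_{ij}=b_i-a_j$, $b_1\ge\dots\ge b_{n-1}$, $a_1\ge\dots\ge a_n$. The Hilbert function of $Z$ is $Hf_Z(t)=\dim_{\mathbb{C}}(\mathbb{C}[x_0,x_1,x_2]/I_Z)_t$, $I_Z$ the homogeneous ideal of $Z$. *)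

(* Defs.v *)
From HB Require Import structures.
From Stdlib Require Import ClassicalEpsilon.
From mathcomp Require Import all_boot all_order all_algebra.
From mathcomp Require Import Rstruct complex.
From mathcomp Require Import mpoly.

Set Implicit Arguments.
Unset Strict Implicit.
Unset Printing Implicit Defensive.

Import Order.TTheory GRing.Theory Num.Theory.
Local Open Scope ring_scope.

Definition CC : Type := complex Rdefinitions.R.

Definition S : Type := {mpoly CC[3]}.

Definition homog_int (e : int) (p : S) : Prop :=
  match e with
  | Posz k => p \is k.-homog
  | Negz _ => p = 0
  end.

Definition homcomp (k : nat) (p : S) : S :=
  \sum_(m <- msupp p | mdeg m == k) p@_m *: 'X_[m].

Definition homogeneous_ideal (I : pred S) : Prop :=
  [/\ I 0,
      (forall p q, I p -> I q -> I (p + q)),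
      (forall f p, I p -> I (f * p)) &
      (forall p k, I p -> I (homcomp k p))].

(** [I] is saturated with respect to the irrelevant ideal (x_0,x_1,x_2). *)
Definition saturated (I : pred S) : Prop :=
  forall f : S,
    (exists N : nat, forall m : 'X_{1..3}, mdeg m = N -> I ('X_[m] * f)) -> I f.

(** [hf_is I t e]: the degree-[t] piece (S/I)_t has dimension [e] over C,
    i.e. there are [e] homogeneous polynomials of degree [t] linearly
    independent modulo I, and no [e.+1] such polynomials. *)
Definition indep_mod (I : pred S) (e : nat) (s : 'I_e -> S) : Prop :=
  forall c : 'I_e -> CC, I (\sum_(i < e) c i *: s i) -> forall i, c i = 0.

Definition hf_is (I : pred S) (t : int) (e : nat) : Prop :=
  (exists s : 'I_e -> S, (forall i, homog_int t (s i)) /\ indep_mod I s) /\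
  (forall s : 'I_e.+1 -> S, (forall i, homog_int t (s i)) -> ~ indep_mod I s).

Definition HF (I : pred S) (t : int) : nat :=
  epsilon (inhabits 0%N) (hf_is I t).

Definition degZ (I : pred S) : nat :=
  epsilon (inhabits 0%N)
    (fun e => exists t0 : int, forall t : int, t0 <= t -> HF I t = e).

(** [I] is the homogeneous ideal I_Z of a zero-dimensional subscheme
    Z of P^2: a proper, saturated homogeneous ideal whose Hilbert function
    is eventually constant. *)
Definition zero_dim_scheme_ideal (I : pred S) : Prop :=
  [/\ homogeneous_ideal I, saturated I, ~ I 1 &
      exists (e : nat) (t0 : int), forall t : int, t0 <= t -> HF I t = e].

(** [D] is a degree Hilbert-Burch matrix of the scheme with ideal [I]:
    D = (b_i - a_j) arising from a (not necessarily minimal) free resolution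
      0 -> (+)_{i<m} O(-b_i) --A--> (+)_{j<n} O(-a_j) --g--> I_Z -> 0,
    with deg f_ij = b_i - a_j, b and a nonincreasing.  The resolution is
    expressed on graded S-modules (via the global-sections functor Gamma_star), where it is
    equivalent to the sheaf resolution since H^1_star(O_{P^2}) = 0. *)
Definition is_dHB (I : pred S) (m n : nat) (D : 'M[int]_(m, n)) : Prop :=
  exists (a : 'I_n -> int) (b : 'I_m -> int) (g : 'I_n -> S)
         (A : 'I_m -> 'I_n -> S),
  (forall j j' : 'I_n, (j <= j')%N -> a j' <= a j) /\
      (forall i i' : 'I_m, (i <= i')%N -> b i' <= b i) /\
      (forall i j, D i j = b i - a j) /\
      (forall i j, homog_int (b i - a j) (A i j)) /\
      (forall j, homog_int (a j) (g j)) /\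
      (* surjectivity onto I_Z *)
      (forall p, I p <-> exists h : 'I_n -> S, p = \sum_(j < n) h j * g j) /\
      (* exactness in the middle (including composite = 0) *)
      (forall h : 'I_n -> S, \sum_(j < n) h j * g j = 0 <->
         exists c : 'I_m -> S, forall j, h j = \sum_(i < m) c i * A i j) /\
      (* injectivity of A *)
      (forall c : 'I_m -> S,
         (forall j, \sum_(i < m) c i * A i j = 0) -> forall i, c i = 0).

Definition homogeneous_mx (n : nat) (M : 'M[int]_n) : Prop :=
  forall i i' j j' : 'I_n, (i < i')%N -> (j < j')%N ->
    M i j + M i' j' = M i j' + M i' j.

Definition well_ordered_mx (n : nat) (M : 'M[int]_n) : Prop :=
  forall i i' j j' : 'I_n, (i < i')%N -> (j < j')%N ->
    M i' j <= M i j /\ M i j <= M i j'.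

(** Degree of a square homogeneous matrix: sum_i m_{i sigma(i)}, computed
    with sigma = identity (it is independent of sigma). *)
Definition mx_degree (n : nat) (M : 'M[int]_n) : int := \sum_(i < n) M i i.

(* Main.v *)
Require Import Defs.
From HB Require Import structures.
From mathcomp Require Import all_boot all_order all_algebra.
From mathcomp Require Import Rstruct complex.
From mathcomp Require Import mpoly.
From mathcomp Require Import zify ring lra.
From Stdlib Require Import ClassicalEpsilon.
Import Order.TTheory GRing.Theory Num.Theory.
Local Open Scope ring_scope.
Set Implicit Arguments.
Unset Strict Implicit.
Unset Printing Implicit Defensive.
Definition mons (k : nat) : seq 'X_{1..3} := [seq s2m t | t : k.-tuple 'I_3 <- enum (basis 3 k)].
Lemma mem_mons k m : (m \in mons k) = (mdeg m == k).
Proof. by rewrite basis_cover. Qed.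
Lemma uniq_mons k : uniq (mons k).
Proof. exact: uniq_basis. Qed.
Lemma size_mons k : size (mons k) = 'C(k+2, k).
Proof. exact: size_basis 2 k. Qed.

Definition monsI (t : int) := match t with Posz k => mons k | Negz _ => [::] end.
Definition Nn (t : int) := size (monsI t).
Lemma uniq_monsI t : uniq (monsI t).
Proof. by case: t => //= k; apply: uniq_mons. Qed.

Lemma homog_int_coef e (p : S) m : homog_int e p -> m \notin monsI e -> p@_m = 0.
Proof.
case: e => [k|k] /=; last by move=> ->; rewrite mcoeff0.
move=> hp; rewrite mem_mons => hm; exact: (dhomog_nemf_coeff hp hm).
Qed.

Lemma homog_int0 e : homog_int e (0 : S).
Proof. by case: e => //= k; exact: dhomog0. Qed.

Lemma homog_intD e (p q : S) : homog_int e p -> homog_int e q -> homog_int e (p + q).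
Proof. by case: e => [k|k] /=; [apply: dhomogD | move=> -> ->; rewrite addr0]. Qed.

Lemma homog_intZ e c (p : S) : homog_int e p -> homog_int e (c *: p).
Proof. by case: e => [k|k] /=; [apply: dhomogZ | move=> ->; rewrite scaler0]. Qed.

Lemma homog_int_sum e (I : Type) (r : seq I) (P : pred I) (F : I -> S) :
  (forall i, P i -> homog_int e (F i)) -> homog_int e (\sum_(i <- r | P i) F i).
Proof.
move=> H; elim/big_rec: _ => [|i x Pi hx]; first exact: homog_int0.
by apply: homog_intD => //; apply: H.
Qed.

Lemma homog_intX e m : m \in monsI e -> homog_int e ('X_[m] : S).
Proof. by case: e => [k|k] //=; rewrite mem_mons dhomogX. Qed.

Lemma homog_intM e f (p q : S) :
  homog_int e p -> homog_int f q -> homog_int (e + f) (p * q).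
Proof.
case: e => [k|k] /=; last by move=> -> _; rewrite mul0r; apply: homog_int0.
case: f => [l|l] /=; last by move=> _ ->; rewrite mulr0; apply: homog_int0.
by move=> hp hq; have := dhomogM hp hq.
Qed.

Lemma homcompE k (p : S) : homcomp k p = pihomog mdeg k p.
Proof. by []. Qed.

Lemma pihomogM (al K : nat) (h g : S) : g \is al.-homog ->
  pihomog mdeg K (h * g) = if (al <= K)%N then pihomog mdeg (K - al) h * g else 0.
Proof.
move=> hg; set N := maxn (msize h) K.+1.
rewrite {1}(@pihomog_partitionE _ _ mdeg N h); last by rewrite leq_maxl.
rewrite mulr_suml raddf_sum /=.
have E : forall d : 'I_N, pihomog mdeg K (pihomog mdeg d h * g) =
   if (d + al == K)%N then pihomog mdeg d h * g else 0.
  move=> d; have hd := dhomogM (pihomogP mdeg d h) hg.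
  case: eqP => [<-|ne]; first exact: pihomog_dE.
  by apply: (pihomog_ne0 _ hd); apply/eqP.
rewrite (eq_bigr _ (fun d _ => E d)).
case: leqP => hal.
  have hK : (K - al < N)%N by rewrite /N; lia.
  rewrite (bigD1 (Ordinal hK)) //= subnK // eqxx big1 ?addr0 // => d hd.
  case: eqP => // hdk; case/eqP: hd; apply: val_inj => /=; lia.
by rewrite big1 // => d _; case: eqP => //; lia.
Qed.

Definition hc (e : int) (p : S) : S := match e with Posz k => homcomp k p | Negz _ => 0 end.

Lemma hc_homog e p : homog_int e p -> hc e p = p.
Proof. by case: e => [k|k] /= hp; [exact: pihomog_dE | rewrite hp]. Qed.

Lemma homog_hc e p : homog_int e (hc e p).
Proof. by case: e => [k|k] //=; exact: pihomogP. Qed.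

Lemma hcD e p q : hc e (p + q) = hc e p + hc e q.
Proof. by case: e => [k|k] /=; [rewrite !homcompE pihomogD | rewrite addr0]. Qed.

Lemma hc_sum e (I : Type) (r : seq I) (P : pred I) (F : I -> S) :
  hc e (\sum_(i <- r | P i) F i) = \sum_(i <- r | P i) hc e (F i).
Proof. by case: e => [k|k] /=; [rewrite !homcompE (raddf_sum (pihomog mdeg k)) | rewrite big1]. Qed.

Lemma hcM e a (h g : S) : homog_int a g -> hc (e + a) (h * g) = hc e h * g.
Proof.
case: a => [al|al] /=; last by move=> ->; rewrite !mulr0; case: (e + _) => //= k; rewrite homcompE raddf0.
move=> hg; case: e => [k|k].
  rewrite -PoszD /= homcompE (pihomogM _ _ hg).
  have -> : (al <= k + al)%N by lia.
  by rewrite addnK.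
case E: (Negz k + Posz al) => [K|K] /=.
  rewrite homcompE (pihomogM _ _ hg) mul0r; case: leqP => // H.
  move: E; rewrite NegzE => E; exfalso; lia.
by rewrite mul0r.
Qed.
Section Fam.
Variables (n : nat) (e : 'I_n -> int).

Definition src : seq ('I_n * 'X_{1..3}) :=
  [seq (j, m) | j <- enum 'I_n, m <- monsI (e j)].
Definition L := size src.
Definition sx (i : 'I_L) := tnth (in_tuple src) i.

Lemma mem_src x : (x \in src) = (x.2 \in monsI (e x.1)).
Proof.
apply/allpairsPdep/idP => [[j [m [_ hm ->]]] //|hx].
by exists x.1, x.2; split => //; [rewrite mem_enum | case: x {hx}].
Qed.

Lemma uniq_src : uniq src.
Proof.
apply: allpairs_uniq_dep; first exact: enum_uniq.
  by move=> j _; exact: uniq_monsI.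
by move=> [j1 m1] [j2 m2] _ _ /= [E1 E2]; subst.
Qed.

Lemma sx_in i : sx i \in src.
Proof. exact: mem_tnth. Qed.

Lemma sx_inj : injective sx.
Proof. by apply/tuple_uniqP; exact: uniq_src. Qed.

Lemma sx_surj x : x \in src -> exists i, sx i = x.
Proof.
move=> hx; have hi : (index x src < L)%N by rewrite /L index_mem.
exists (Ordinal hi); rewrite /sx (tnth_nth x) /=; exact: nth_index.
Qed.

Lemma sx_mem i : (sx i).2 \in monsI (e (sx i).1).
Proof. by rewrite -mem_src sx_in. Qed.

Lemma L_sum : L = (\sum_j Nn (e j))%N.
Proof. by rewrite /L size_allpairs_dep sumnE big_map big_enum. Qed.

Definition fam (v : 'rV[CC]_L) (j : 'I_n) : S :=
  \sum_(i < L | (sx i).1 == j) v 0 i *: 'X_[(sx i).2].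

Definition cof (h : 'I_n -> S) : 'rV[CC]_L := \row_i (h (sx i).1)@_((sx i).2).

Lemma fam_homog v j : homog_int (e j) (fam v j).
Proof.
apply: homog_int_sum => i /eqP hi; apply: homog_intZ; apply: homog_intX.
by rewrite -hi sx_mem.
Qed.

Lemma cof_fam v : cof (fam v) = v.
Proof.
apply/rowP => i; rewrite mxE /fam raddf_sum /= (bigD1 i) //=.
rewrite mcoeffZ mcoeffX eqxx mulr1 big1 ?addr0 // => i' /andP [/eqP h1 hne].
rewrite mcoeffZ mcoeffX; case: eqP => [h2|_]; last by rewrite mulr0.
by case/negP: hne; apply/eqP; apply: sx_inj; case: (sx i') h1 h2 => ? ?; case: (sx i) => ? ? /= -> ->.
Qed.

Lemma cof_inj h1 h2 : (forall j, homog_int (e j) (h1 j)) ->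
  (forall j, homog_int (e j) (h2 j)) -> cof h1 = cof h2 -> forall j, h1 j = h2 j.
Proof.
move=> H1 H2 E j; apply/mpolyP => m.
case hm: (m \in monsI (e j)); last first.
  by rewrite !(homog_int_coef _ (negbT hm)).
have [i hi] : exists i, sx i = (j, m) by apply: sx_surj; rewrite mem_src.
by move/rowP: E => /(_ i); rewrite !mxE hi.
Qed.

Lemma fam_cof h : (forall j, homog_int (e j) (h j)) -> forall j, fam (cof h) j = h j.
Proof. by move=> H; apply: cof_inj => //; [exact: fam_homog | rewrite cof_fam]. Qed.

Lemma eq_cof h1 h2 : h1 =1 h2 -> cof h1 = cof h2.
Proof. by move=> E; apply/rowP => i; rewrite !mxE E. Qed.

Lemma fam_delta v j : fam v j = \sum_i v 0 i *: fam (delta_mx 0 i) j.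
Proof.
have E : forall i, fam (delta_mx 0 i) j = if (sx i).1 == j then 'X_[(sx i).2] else 0.
  move=> i; rewrite /fam.
  rewrite (eq_bigr (fun i' => (i' == i)%:R *: 'X_[(sx i').2])); last first.
    by move=> i' _; rewrite mxE eqxx.
  rewrite big_mkcond /= (bigD1 i) //= eqxx scale1r big1 ?addr0; first by case: ifP.
  by move=> i' /negbTE ->; rewrite scale0r; case: ifP.
rewrite {1}/fam big_mkcond /=; apply: eq_bigr => i _; rewrite E.
by case: ifP => //; rewrite scaler0.
Qed.

End Fam.

Definition mulF n n' (h : 'I_n -> S) (K : 'I_n -> 'I_n' -> S) (l : 'I_n') : S :=
  \sum_j h j * K j l.

Section MK.
Variables (n n' : nat) (e : 'I_n -> int) (e' : 'I_n' -> int) (K : 'I_n -> 'I_n' -> S).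

Definition MK : 'M[CC]_(L e, L e') :=
  \matrix_(i, l) cof e' (mulF (@fam _ e (delta_mx 0 i)) K) 0 l.

Lemma mulF_fam v l :
  mulF (@fam _ e v) K l = \sum_i v 0 i *: mulF (@fam _ e (delta_mx 0 i)) K l.
Proof.
rewrite /mulF; under eq_bigr do rewrite fam_delta mulr_suml.
rewrite exchange_big; apply: eq_bigr => i _; rewrite scaler_sumr.
by apply: eq_bigr => j _; rewrite scalerAl.
Qed.

Lemma MK_mul v : v *m MK = cof e' (mulF (@fam _ e v) K).
Proof.
apply/rowP => l; rewrite !mxE mulF_fam raddf_sum /=.
by apply: eq_bigr => i _; rewrite mcoeffZ !mxE.
Qed.

Hypothesis HK : forall j l, homog_int (e' l - e j) (K j l).

Lemma mulF_homog h : (forall j, homog_int (e j) (h j)) ->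
  forall l, homog_int (e' l) (mulF h K l).
Proof.
move=> H l; apply: homog_int_sum => j _.
have -> : e' l = e j + (e' l - e j) by rewrite addrC subrK.
exact: homog_intM.
Qed.

Lemma mulF_hc h f : (forall l, homog_int (e' l) (f l)) ->
  (forall l, mulF h K l = f l) ->
  forall l, mulF (fun j => hc (e j) (h j)) K l = f l.
Proof.
move=> Hf E l; rewrite -(hc_homog (Hf l)) -E /mulF hc_sum.
apply: eq_bigr => j _.
have {1}-> : e' l = e j + (e' l - e j) by rewrite addrC subrK.
by rewrite hcM.
Qed.

End MK.
Section HF.
Variables (I : pred S) (t : int).
Local Notation et := (fun _ : 'I_1 => t).
Local Notation N := (L et).
Definition cof1 (p : S) : 'rV[CC]_N := cof et (fun _ => p).
Definition pol (u : 'rV[CC]_N) : S := fam u ord0.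

Lemma pol_homog u : homog_int t (pol u).
Proof. exact: (fam_homog u ord0). Qed.

Lemma cof1_pol u : cof1 (pol u) = u.
Proof.
transitivity (cof et (fam u)); last exact: cof_fam.
by apply: eq_cof => j; rewrite ord1.
Qed.

Lemma cof1_inj p q : homog_int t p -> homog_int t q -> cof1 p = cof1 q -> p = q.
Proof. by move=> hp hq E; apply: (@cof_inj _ et (fun _ => p) (fun _ => q) _ _ E ord0). Qed.

Lemma cof1_lin k (c : 'I_k -> CC) (s : 'I_k -> S) :
  cof1 (\sum_i c i *: s i) = \sum_i c i *: cof1 (s i).
Proof.
apply/rowP => i; rewrite mxE summxE raddf_sum /=.
by apply: eq_bigr => j _; rewrite mcoeffZ !mxE.
Qed.

Variable (r : nat) (W : 'M[CC]_(r, N)).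
Hypothesis HW : forall p, homog_int t p -> I p <-> (cof1 p <= W)%MS.

Lemma hf_of_mx : hf_is I t (\rank (W^C)%MS).
Proof.
split.
  set B := row_base (W^C)%MS.
  exists (fun i => pol (row i B)); split => [i|c]; first exact: pol_homog.
  have hs : homog_int t (\sum_i c i *: pol (row i B)).
    by apply: homog_int_sum => i _; apply: homog_intZ; apply: pol_homog.
  move/(HW hs); rewrite cof1_lin.
  under eq_bigr do rewrite cof1_pol.
  have -> : \sum_i c i *: row i B = (\row_i c i) *m B.
    by rewrite mulmx_sum_row; apply: eq_bigr => i _; rewrite mxE.
  move=> hW.
  have hC : ((\row_i c i) *m B <= W^C)%MS by apply: mulmx_sub; rewrite /B eq_row_base.
  have : ((\row_i c i) *m B <= W :&: W^C)%MS by rewrite sub_capmx hW hC.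
  rewrite capmx_compl submx0 => /eqP h0.
  have : (\row_i c i) *m B = 0 *m B by rewrite mul0mx.
  move/(row_free_inj (row_base_free _)) => /rowP h i.
  by move: (h i); rewrite !mxE.
move=> s hs hind.
set Ms := \matrix_i cof1 (s i).
have key : forall c : 'rV_(\rank W^C).+1, (c *m Ms <= W)%MS -> c = 0.
  move=> c; rewrite mulmx_sum_row.
  under eq_bigr do rewrite rowK.
  rewrite -cof1_lin -HW; last first.
    by apply: homog_int_sum => i _; apply: homog_intZ.
  move/hind => h; apply/rowP => i; by rewrite h mxE.
have fr : row_free Ms.
  by apply: inj_row_free => c h; apply: key; rewrite h sub0mx.
have cap0 : \rank (Ms :&: W)%MS = 0%N.
  have /eqP -> : (Ms :&: W)%MS == 0.
    apply/rowV0P => v hv.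
    have /submxP [c hc] : (v <= Ms)%MS by apply: submx_trans hv (capmxSl _ _).
    rewrite hc in hv *; rewrite (key c) ?mul0mx //.
    exact: (submx_trans hv (capmxSr Ms W)).
  by rewrite mxrank0.
have := mxrank_sum_cap Ms W; rewrite cap0 addn0 (eqP fr).
have := rank_leq_col (Ms + W)%MS; have := rank_leq_col W.
have := mxrank_compl W; lia.
Qed.
End HF.

Lemma hf_unique I t e1 e2 : hf_is I t e1 -> hf_is I t e2 -> e1 = e2.
Proof.
wlog lt : e1 e2 / (e1 < e2)%N.
  move=> H h1 h2; case: (ltngtP e1 e2) => [l|l|->] //.
    exact: H.
  by apply/esym/H.
move=> [_ h1] [[s [hs hi]] _]; exfalso.
apply: (h1 (fun i => s (widen_ord lt i))) => [i|c hc]; first exact: hs.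
pose c' (j : 'I_e2) := if (j < e1.+1)%N then c (inord j) else 0.
have hc' : forall i : 'I_e1.+1, c' (widen_ord lt i) = c i.
  by move=> i; rewrite /c' /= ltn_ord; congr c; apply: val_inj; rewrite /= inordK.
have E : \sum_(j < e2) c' j *: s j = \sum_(i < e1.+1) c i *: s (widen_ord lt i).
  rewrite (bigID (fun j : 'I_e2 => (j < e1.+1)%N)) /= [X in _ + X]big1 ?addr0; last first.
    by move=> j /negbTE hj; rewrite /c' hj scale0r.
  rewrite (big_ord_narrow lt); apply: eq_bigr => i _; by rewrite hc'.
move=> i; rewrite -hc'; apply: hi; by rewrite E.
Qed.

Lemma HF_eq I t e : hf_is I t e -> HF I t = e.
Proof.
move=> h; have h' := h; rewrite /HF; apply: (hf_unique _ h').
have := epsilon_spec (inhabits 0%N) (hf_is I t).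
by apply; exists e.
Qed.
Section Res.
Variables (I : pred S) (m n : nat) (a : 'I_n -> int) (b : 'I_m -> int)
  (g : 'I_n -> S) (A : 'I_m -> 'I_n -> S).
Hypothesis HA : forall i j, homog_int (b i - a j) (A i j).
Hypothesis Hg : forall j, homog_int (a j) (g j).
Hypothesis Hsurj : forall p, I p <-> exists h : 'I_n -> S, p = \sum_(j < n) h j * g j.
Hypothesis Hex : forall h : 'I_n -> S, \sum_(j < n) h j * g j = 0 <->
         exists c : 'I_m -> S, forall j, h j = \sum_(i < m) c i * A i j.
Hypothesis Hinj : forall c : 'I_m -> S,
  (forall j, \sum_(i < m) c i * A i j = 0) -> forall i, c i = 0.
Variable t : int.
Local Notation ea := (fun j => t - a j).
Local Notation eb := (fun i => t - b i).
Local Notation et := (fun _ : 'I_1 => t).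
Local Notation Kg := (fun (j : 'I_n) (_ : 'I_1) => g j).
Local Notation G := (MK ea et Kg).
Local Notation Am := (MK eb ea A).

Lemma HKg j l : homog_int (et l - ea j) (Kg j l).
Proof. by have -> : t - (t - a j) = a j by ring. Qed.

Lemma HKA i j : homog_int (ea j - eb i) (A i j).
Proof. by have -> : (t - a j) - (t - b i) = b i - a j by ring. Qed.

Lemma cof0 n' (e : 'I_n' -> int) : cof e (fun _ => 0) = 0.
Proof. by apply/rowP => i; rewrite !mxE mcoeff0. Qed.

Lemma W1 p : homog_int t p -> I p <-> (cof1 t p <= G)%MS.
Proof.
move=> hp; split.
  case/Hsurj => h hh.
  have E1 : forall l, mulF h Kg l = p by move=> l; rewrite hh.
  have E2 := mulF_hc HKg (f := fun _ => p) (fun _ => hp) E1.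
  apply/submxP; exists (cof ea (fun j => hc (ea j) (h j))).
  rewrite MK_mul /cof1; apply: eq_cof => l.
  rewrite -(E2 l); apply: eq_bigr => j _.
  by rewrite fam_cof // => j'; exact: homog_hc.
case/submxP => v; rewrite MK_mul => E.
have := cof_inj (e := et) (h1 := fun _ => p) (fun _ => hp) (mulF_homog HKg (fam_homog v)) E ord0.
by move=> ->; apply/Hsurj; exists (fam v).
Qed.

Lemma W2a : (Am <= kermx G)%MS.
Proof.
apply/sub_kermxP; apply/row_matrixP => i; rewrite row_mul row0 rowE.
set w := delta_mx 0 i.
rewrite [w *m _]MK_mul MK_mul -(cof0 et); apply: eq_cof => l.
rewrite /mulF.
have -> : \sum_j fam (cof ea (mulF (fam w) A)) j * g j =
          \sum_j mulF (fam w) A j * g j.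
  apply: eq_bigr => j _; rewrite fam_cof //.
  exact: (mulF_homog HKA (fam_homog w)).
by apply/Hex; exists (fam w).
Qed.

Lemma W2b : (kermx G <= Am)%MS.
Proof.
apply/row_subP => i; set u := row i (kermx G).
have hu : u *m G = 0 by rewrite /u -row_mul mulmx_ker row0.
move: hu; rewrite MK_mul -(cof0 et) => E.
have := cof_inj (e := et) (h2 := fun _ => 0) (mulF_homog HKg (fam_homog u)) (fun _ => homog_int0 t) E ord0.
rewrite /mulF => /Hex [c hcc].
have E2 := mulF_hc HKA (f := fam u) (fam_homog u) (fun j => esym (hcc j)).
apply/submxP; exists (cof eb (fun i => hc (eb i) (c i))).
rewrite MK_mul -[LHS](cof_fam u); apply: eq_cof => j.
rewrite -(E2 j); apply: eq_bigr => i' _.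
by rewrite fam_cof // => i''; exact: homog_hc.
Qed.

Lemma W3 : row_free Am.
Proof.
apply: inj_row_free => w; rewrite MK_mul -(cof0 ea) => E.
have E1 := cof_inj (e := ea) (h2 := fun _ => 0) (mulF_homog HKA (fam_homog w)) (fun _ => homog_int0 _) E.
have E2 := Hinj E1.
by rewrite -(cof_fam w) -(cof0 eb); apply: eq_cof.
Qed.

Lemma rankG : (\rank G + L eb = L ea)%N.
Proof.
have h1 := mxrank_ker G.
have h2 : \rank (kermx G) = \rank Am.
  by apply/eqP; rewrite eqn_leq !mxrankS // ?W2a ?W2b.
have h3 := rank_leq_row G.
move: W3; rewrite /row_free => /eqP h4; lia.
Qed.

Lemma HF_formula : (HF I t + L ea = L et + L eb)%N.
Proof.
rewrite (HF_eq (hf_of_mx W1)) mxrank_compl.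
have := rankG; have := rank_leq_col G; lia.
Qed.
End Res.
Lemma binC2 k : (2 * 'C(k + 2, k) = (k + 1) * (k + 2))%N.
Proof.
elim: k => [|k IH] //.
have -> : (k.+1 + 2 = (k + 2).+1)%N by lia.
rewrite binS.
have -> : 'C(k + 2, k.+1) = (k + 2)%N.
  rewrite (_ : (k + 2 = (k.+1).+1)%N); [by rewrite binSn | lia].
lia.
Qed.

Lemma two_Nn x : -2 <= x -> 2 * (Nn x)%:Z = (x + 1) * (x + 2).
Proof.
case: x => [k|k] h.
  rewrite /Nn /= size_mons; have := binC2 k; nia.
rewrite /Nn /=; move: h; rewrite NegzE.
case: k => [|[|k]] h //; lia.
Qed.

Lemma Posz_sum n (F : 'I_n -> nat) : Posz (\sum_(j < n) F j)%N = \sum_(j < n) Posz (F j).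
Proof.
elim: n F => [|n IH] F; first by rewrite !big_ord0.
by rewrite !big_ord_recr /= PoszD IH.
Qed.

Lemma sum_two_Nn n (f : 'I_n -> int) t : (forall j, -2 <= t - f j) ->
  2 * \sum_(j < n) (Nn (t - f j))%:Z =
    n%:Z * (t * t + 3 * t + 2) - (2 * t + 3) * \sum_(j < n) f j + \sum_(j < n) f j * f j.
Proof.
elim: n f => [|n IH] f H; first by rewrite !big_ord0; ring.
rewrite !big_ord_recr /= mulrDr IH; last by move=> j; apply: H.
rewrite two_Nn; last exact: H.
have -> : Posz n.+1 = Posz n + 1 by rewrite -addn1 PoszD.
ring.
Qed.
Lemma ord0_false (i : 'I_0) : False. Proof. by case: i. Qed.

Definition res (I : pred S) m n (a : 'I_n -> int) (b : 'I_m -> int)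
  (g : 'I_n -> S) (A : 'I_m -> 'I_n -> S) :=
  [/\ (forall i j, homog_int (b i - a j) (A i j)),
      (forall j, homog_int (a j) (g j)),
      (forall p, I p <-> exists h : 'I_n -> S, p = \sum_(j < n) h j * g j),
      (forall h : 'I_n -> S, \sum_(j < n) h j * g j = 0 <->
         exists c : 'I_m -> S, forall j, h j = \sum_(i < m) c i * A i j) &
      (forall c : 'I_m -> S, (forall j, \sum_(i < m) c i * A i j = 0) -> forall i, c i = 0)].

Definition evc (I : pred S) := exists (e : nat) (t0 : int), forall t : int, t0 <= t -> HF I t = e.

Lemma HF_res I m n a b g A : @res I m n a b g A -> forall t,
  (HF I t + \sum_j Nn (t - a j) = Nn t + \sum_i Nn (t - b i))%N.
Proof.
case=> HA Hg Hs He Hi t.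
have := HF_formula HA Hg Hs He Hi t.
by rewrite !L_sum big_ord1.
Qed.

Lemma HF_int I m n a b g A t : @res I m n a b g A -> -2 <= t ->
  (forall j, -2 <= t - a j) -> (forall i, -2 <= t - b i) ->
  2 * (HF I t)%:Z = (t * t + 3 * t + 2) * (1 - n%:Z + m%:Z)
     + (2 * t + 3) * (\sum_j a j - \sum_i b i) - \sum_j a j * a j + \sum_i b i * b i.
Proof.
move=> hr ht ha hb; have := HF_res hr t; move/(congr1 Posz); rewrite !PoszD !Posz_sum => E.
have E1 := sum_two_Nn ha; have E2 := sum_two_Nn hb; have E3 := two_Nn ht.
have EH : (HF I t)%:Z = (Nn t)%:Z + \sum_i (Nn (t - b i))%:Z - \sum_j (Nn (t - a j))%:Z.
  by rewrite -E addrK.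
rewrite (_ : 2 * (HF I t)%:Z = 2 * (Nn t)%:Z + 2 * (\sum_i (Nn (t - b i))%:Z)
   - 2 * (\sum_j (Nn (t - a j))%:Z)); last by rewrite EH; ring.
rewrite E1 E2 E3; ring.
Qed.

Lemma ev_lin (I : pred S) (al be T : int) :
  (forall t, T <= t -> 2 * (HF I t)%:Z = al * t + be) -> evc I -> al = 0.
Proof.
move=> H [e [t0 He]].
have h1 : T <= `|T| + `|t0| by lia.
have h2 : t0 <= `|T| + `|t0| by lia.
have E1 := H _ h1; have E2 := H (`|T| + `|t0| + 1) (ltW (ltr_pwDr ltr01 h1)).
rewrite He // in E1; rewrite He in E2; last lia.
nia.
Qed.

Lemma zero_false (I : pred S) : (forall p, I p <-> p = 0) -> evc I -> False.
Proof.
move=> HI [e [t0 He]].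
have hr : @res I 0 0 (fun j => 0) (fun i => 0) (fun j => 0) (fun i j => 0).
  split.
  - by move=> i; case: (ord0_false i).
  - by move=> i; case: (ord0_false i).
  - move=> p; rewrite HI; split => [->|[h ->]]; last by rewrite big_ord0.
    by exists (fun _ => 0); rewrite big_ord0.
  - move=> h; rewrite big_ord0; split => _ //; by exists (fun _ => 0) => i; case: (ord0_false i).
  - by move=> c _ i; case: (ord0_false i).
have H t : (HF I t = Nn t)%N by have := HF_res hr t; rewrite !big_ord0 !addn0.
have h1 : t0 <= `|t0| by lia.
have h2 : t0 <= `|t0| + 1 by lia.
have E1 := He _ h1; have E2 := He _ h2.
rewrite H in E1; rewrite H in E2.
have F1 := two_Nn (x := `|t0|) (ltac:(lia)).
have F2 := two_Nn (x := `|t0| + 1) (ltac:(lia)).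
rewrite E1 in F1; rewrite E2 in F2; nia.
Qed.

Lemma const_homog (p : S) : p \is 0.-homog -> p = (p@_0%MM)%:MP.
Proof.
move=> hp; apply/mpolyP => mm; rewrite mcoeffC.
case: eqP => [->|ne]; first by rewrite mulr1.
rewrite mulr0; apply: (dhomog_nemf_coeff hp).
by rewrite mdeg_eq0; apply/eqP.
Qed.

Lemma homog_neg e (p : S) : homog_int e p -> e < 0 -> p = 0.
Proof. by case: e => [k|k] //= _; lia. Qed.

Lemma principal_false (I : pred S) (g0 : S) a0 : g0 != 0 -> homog_int a0 g0 ->
  (forall p, I p <-> exists q, p = q * g0) -> ~ I 1 -> evc I -> False.
Proof.
move=> nz hg HI HI1 hev.
have hr : @res I 0 1 (fun _ => a0) (fun i => 0) (fun _ => g0) (fun i j => 0).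
  split.
  - by move=> i; case: (ord0_false i).
  - by move=> _.
  - move=> p; rewrite HI; split => [[q ->]|[h ->]].
      by exists (fun _ => q); rewrite big_ord1.
    by exists (h ord0); rewrite big_ord1.
  - move=> h; rewrite big_ord1; split => [/eqP|[c hc]].
      rewrite mulf_eq0 (negbTE nz) orbF => /eqP h0.
      by exists (fun _ => 0) => j; rewrite (ord1 j) h0 big_ord0.
    by rewrite hc big_ord0 mul0r.
  - by move=> c _ i; case: (ord0_false i).
have a0ge : 0 <= a0.
  case: (lerP 0 a0) => // /(homog_neg hg) h0; by rewrite h0 eqxx in nz.
have al0 : 2 * a0 = 0.
  apply: (@ev_lin I _ (3 * a0 - a0 * a0) a0 _ hev) => t ht.
  rewrite (HF_int (t := t) hr); first last.
  - by move=> i; case: (ord0_false i).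
  - move=> j /=; lia.
  - lia.
  rewrite !big_ord1 !big_ord0; ring.
have a00 : a0 = 0 by lia.
move: hg; rewrite a00 /= => /const_homog E.
have c0 : g0@_0%MM != 0.
  by apply: contra nz => /eqP c0; rewrite E c0 mpolyC_eq0.
apply: HI1; apply/HI; exists ((g0@_0%MM)^-1)%:MP.
by rewrite {2}E -mpolyCM mulVf.
Qed.
Lemma gen_a0_le_b0 (I : pred S) k (a : 'I_k.+2 -> int) (b : 'I_k.+1 -> int) g A :
  @res I k.+1 k.+2 a b g A ->
  (forall i i' : 'I_k.+1, (i <= i')%N -> b i' <= b i) ->
  ~ I 1 -> evc I -> a ord0 <= b ord0.
Proof.
case=> HA Hg Hs He Hi Hb HI1 hev.
case: (lerP (a ord0) (b ord0)) => // hlt; exfalso.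
have A0 : forall i, A i ord0 = 0.
  move=> i; apply: (homog_neg (HA i ord0)); have := Hb ord0 i (leq0n _); lia.
have gj : forall j, j != ord0 -> g j = 0.
  move=> j hj.
  pose h := fun l : 'I_k.+2 => if l == ord0 then g j else if l == j then - g ord0 else 0.
  have : \sum_l h l * g l = 0.
    rewrite (bigD1 ord0) //= (bigD1 j) /=; last by rewrite hj.
    rewrite big1 ?addr0; last first.
      by move=> l /andP [hl1 hl2]; rewrite /h (negbTE hl1) (negbTE hl2) mul0r.
    by rewrite /h eqxx (negbTE hj) eqxx mulNr mulrC subrr.
  case/He => c hc; move: (hc ord0); rewrite /h eqxx => ->.
  by apply: big1 => i _; rewrite A0 mulr0.
have g0nz : g ord0 != 0.
  apply/negP => /eqP g0.
  pose h := fun l : 'I_k.+2 => if l == ord0 then (1 : S) else 0.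
  have : \sum_l h l * g l = 0.
    by apply: big1 => l _; rewrite /h; case: eqP => [->|_]; [rewrite g0 mulr0 | rewrite mul0r].
  case/He => c hc; move: (hc ord0); rewrite /h eqxx big1 => [/eqP|i _].
    by rewrite oner_eq0.
  by rewrite A0 mulr0.
apply: (principal_false g0nz (Hg ord0) _ HI1 hev) => p; rewrite Hs; split.
  case=> h ->; exists (h ord0); rewrite (bigD1 ord0) //= big1 ?addr0 // => j hj.
  by rewrite gj ?mulr0.
case=> q ->; exists (fun l => if l == ord0 then q else 0).
rewrite (bigD1 ord0) //= ?eqxx big1 ?addr0 // => j hj; by rewrite (negbTE hj) mul0r.
Qed.

Lemma gen_a0_ge0 (I : pred S) m n (a : 'I_n.+1 -> int) (b : 'I_m -> int) g A :
  @res I m n.+1 a b g A -> (forall j j' : 'I_n.+1, (j <= j')%N -> a j' <= a j) ->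
  evc I -> 0 <= a ord0.
Proof.
case=> HA Hg Hs He Hi Ha hev.
case: (lerP 0 (a ord0)) => // hlt; exfalso.
have g0 : forall j, g j = 0.
  move=> j; apply: (homog_neg (Hg j)); have := Ha ord0 j (leq0n _); lia.
apply: (zero_false _ hev) => p; rewrite Hs; split.
  by case=> h ->; apply: big1 => j _; rewrite g0 mulr0.
by move=> ->; exists (fun _ => 0); rewrite big1 // => j _; rewrite mul0r.
Qed.

Lemma le_sum_abs n (f : 'I_n -> int) j : f j <= \sum_i `|f i|.
Proof.
rewrite (bigD1 j) //=; apply: (le_trans (ler_norm _)).
by rewrite lerDl; apply: sumr_ge0 => i _.
Qed.

Lemma degZ_eq (I : pred S) e t0 : (forall t, t0 <= t -> HF I t = e) -> degZ I = e.
Proof.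
move=> He.
have := epsilon_spec (inhabits 0%N)
    (fun e => exists t0 : int, forall t : int, t0 <= t -> HF I t = e).
case; first by exists e, t0.
move=> t1 H1; rewrite /degZ.
have h1 : t0 <= `|t0| + `|t1| by lia.
have h2 : t1 <= `|t0| + `|t1| by lia.
by rewrite -(H1 _ h2) He.
Qed.
Theorem proposition5p8 (k : nat) (M : 'M[int]_k.+1) (I : pred S) :
  homogeneous_mx M -> well_ordered_mx M ->
  zero_dim_scheme_ideal I -> is_dHB I (row' ord0 M) ->
  HF I (mx_degree M - 1) = degZ I.
Proof.
move=> hom wo [Hh Hsat HI1 Hev] [a [b [g [A [Ha [Hb [HD [HA [Hg [Hs [He Hi]]]]]]]]]]].
have hr : res I a b g A by split.
destruct k as [|k].
  exfalso.
  have g0nz : g ord0 != 0.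
    apply/negP => /eqP g0.
    have : \sum_(j < 1) (fun _ => (1 : S)) j * g j = 0 by rewrite big_ord1 g0 mulr0.
    case/He => c /(_ ord0); rewrite big_ord0 => /eqP; by rewrite oner_eq0.
  apply: (principal_false g0nz (Hg ord0) _ HI1 Hev) => p; rewrite Hs; split.
    by case=> h ->; exists (h ord0); rewrite big_ord1.
  by case=> q ->; exists (fun _ => q); rewrite big_ord1.
have a0b0 := gen_a0_le_b0 hr Hb HI1 Hev.
have a0ge := gen_a0_ge0 hr Ha Hev.
set SA := \sum_j a j; set SB := \sum_i b i.
set SA2 := \sum_j a j * a j; set SB2 := \sum_i b i * b i.
have hq : forall t, -2 <= t -> (forall j, -2 <= t - a j) -> (forall i, -2 <= t - b i) ->
    2 * (HF I t)%:Z = (2 * t + 3) * (SA - SB) - SA2 + SB2.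
  move=> t h1 h2 h3; rewrite (HF_int hr h1 h2 h3).
  have -> : 1 - (k.+2)%:Z + (k.+1)%:Z = 0 by lia.
  by rewrite mulr0 add0r.
set T := \sum_j `|a j| + \sum_i `|b i|.
have hT : forall t, T <= t -> [/\ -2 <= t, (forall j, -2 <= t - a j) & (forall i, -2 <= t - b i)].
  move=> t ht; have T0 : 0 <= T.
    by rewrite /T addr_ge0 //; apply: sumr_ge0 => i _.
  split; first lia.
    move=> j; have := le_sum_abs a j; have : 0 <= \sum_i `|b i| by apply: sumr_ge0.
    rewrite /T in ht; lia.
  move=> i; have := le_sum_abs b i; have : 0 <= \sum_j `|a j| by apply: sumr_ge0.
  rewrite /T in ht; lia.
have hSA : 2 * (SA - SB) = 0.
  apply: (@ev_lin I _ (3 * (SA - SB) - SA2 + SB2) T _ Hev) => t ht.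
  case: (hT t ht) => h1 h2 h3; rewrite hq //; ring.
have hq2 : forall t, -2 <= t -> (forall j, -2 <= t - a j) -> (forall i, -2 <= t - b i) ->
    2 * (HF I t)%:Z = SB2 - SA2.
  move=> t h1 h2 h3; rewrite hq // (_ : SA - SB = 0); [ring | lia].
have Dij : forall (i : 'I_k.+1) j, M (lift ord0 i) j = b i - a j.
  by move=> i j; rewrite -HD mxE.
have hd : mx_degree M = M ord0 ord0 + a ord0.
  rewrite /mx_degree big_ord_recl.
  have hSA' : SA = a ord0 + \sum_(i < k.+1) a (lift ord0 i) by rewrite /SA big_ord_recl.
  rewrite (eq_bigr (fun i : 'I_k.+1 => b i - a (lift ord0 i))); last by move=> i _; exact: Dij.
  rewrite sumrB -/SB.
  have -> : \sum_(i < k.+1) a (lift ord0 i) = SA - a ord0 by rewrite hSA'; ring.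
  lia.
have hw : M (lift ord0 ord0) ord0 <= M ord0 ord0.
  by case: (wo ord0 (lift ord0 ord0) ord0 (lift ord0 ord0) _ _).
rewrite Dij in hw.
set d := mx_degree M.
have hok : [/\ -2 <= d - 1, (forall j, -2 <= d - 1 - a j) & (forall i, -2 <= d - 1 - b i)].
  split; first lia.
    move=> j; have := Ha ord0 j (leq0n _); lia.
  move=> i; have := Hb ord0 i (leq0n _); lia.
case: hok => o1 o2 o3.
have Hd := hq2 _ o1 o2 o3.
case: Hev => e [t0 He0].
rewrite (degZ_eq He0).
have h1 : T <= `|T| + `|t0| by lia.
have h2 : t0 <= `|T| + `|t0| by lia.
case: (hT _ h1) => p1 p2 p3.
have E1 := hq2 _ p1 p2 p3; rewrite He0 // in E1.
have : Posz (HF I (d - 1)) = Posz e by lia.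
by case.
Qed.
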